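(* Let $X$ be a locally compact Hausdorff space and $\sigma:X\to X$ a homeomorphism. Then each of the following sets is dense in $X$: (1) $\mathrm{Aper}(\sigma)\cup\bigcup_{q\ge1}\mathrm{Fix}_q(\sigma)^\circ$; (2) $\mathrm{Aper}(\sigma)\cup\big(\bigcup_{q\ge1}\mathrm{Fix}_q(\sigma)\big)^\circ$; (3) $\mathrm{Aper}(\sigma)\cup\bigcup_{q\ge1}\mathrm{Per}_q(\sigma)^\circ$; (4) $\mathrm{Aper}(\sigma)\cup\big(\bigcup_{q\ge1}\mathrm{Per}_q(\sigma)\big)^\circ$.
   Context: For $q\ge1$, $\mathrm{Fix}_q(\sigma)=\{x\in X:\sigma^qx=x\}$ and $\mathrm{Per}_q(\sigma)$ is the set of points of least period exactly $q$; $\mathrm{Aper}(\sigma)$ is the set of non-periodic points. A superscript $\circ$ denotes interior in $X$. *)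

(* Defs.v *)
From HB Require Import structures.
From mathcomp Require Import all_boot all_order all_algebra.
From mathcomp Require Import all_classical all_reals all_analysis.
Set Implicit Arguments. Unset Strict Implicit. Unset Printing Implicit Defensive.
Local Open Scope classical_set_scope.

Definition Fix (X : Type) (s : X -> X) (q : nat) : set X :=
  [set x | iter q s x = x].

Definition Per (X : Type) (s : X -> X) (q : nat) : set X :=
  [set x | (0 < q)%N /\ iter q s x = x /\
           forall k : nat, (0 < k)%N -> (k < q)%N -> iter k s x <> x].

Definition Aper (X : Type) (s : X -> X) : set X :=
  [set x | forall q : nat, (0 < q)%N -> iter q s x <> x].

Definition homeomorphism (X : topologicalType) (s : X -> X) : Prop :=
  continuous s /\ exists t : X -> X,
    cancel s t /\ cancel t s /\ continuous t.

(* Main.v *)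
Require Import Defs.
From HB Require Import structures.
From mathcomp Require Import all_boot all_order all_algebra.
From mathcomp Require Import all_classical all_reals all_analysis.
Local Open Scope classical_set_scope.

Section Helpers.
Variable X : topologicalType.

Lemma iter_cont (s : X -> X) : continuous s -> forall n, continuous (iter n s).
Proof.
move=> cs; elim=> [|n IH] x /=; first exact: cvg_id.
exact: (continuous_comp (IH x) (cs _)).
Qed.

Lemma closed_fixf (f : X -> X) : hausdorff_space X -> continuous f ->
  closed [set x | f x = x].
Proof.
move=> hX cf x clx; apply/esym/hX => A B Ax Bfx.
have Bx : nbhs x (f @^-1` B) by exact: (cf x B Bfx).
have [y [/= fy [Ay By]]] := clx _ (filterI Ax Bx).
by exists y; split => //; rewrite /= -fy.
Qed.

Lemma dense_sub (A B : set X) : dense A -> A `<=` B -> dense B.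
Proof.
move=> dA AB O O0 oO; have [x [Ox Ax]] := dA O O0 oO.
by exists x; split => //; exact: AB.
Qed.


Lemma lc_shrink : hausdorff_space X -> locally_compact [set: X] ->
  forall (U : set X) x, open U -> U x ->
  exists V : set X, [/\ open V, V x, compact (closure V) & closure V `<=` U].
Proof.
move=> hX lc U x oU Ux.
have [K + [cK clK]] := lc x I.
rewrite withinET => Kx.
have reg := @compact_regular X x K hX cK Kx.
have UKx : nbhs x (U `&` K) by apply: filterI => //; exact: open_nbhs_nbhs.
have [D Dx DUK] := reg _ UKx.
exists (D°); split.
- exact: open_interior.
- exact: Dx.
- apply: (subclosed_compact _ cK); first exact: closed_closure.
  move=> y /(closureS (@interior_subset _ D)) /DUK [].
  by [].
- by move=> y /(closureS (@interior_subset _ D)) /DUK [].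
Qed.


Lemma baire_lc : hausdorff_space X -> locally_compact [set: X] ->
  forall (F : nat -> set X) (W : set X), open W -> W !=set0 ->
  (forall n, closed (F n)) -> (forall n, W `&` (F n)° = set0) ->
  exists x, W x /\ forall n, ~ F n x.
Proof.
move=> hX lc F W oW W0 clF WF.
have H : forall (n : nat) (V : set X), exists V' : set X,
    (open V /\ V !=set0 /\ V `<=` W) ->
    [/\ open V', V' !=set0, compact (closure V') & closure V' `<=` V `\` F n].
  move=> n V; have [[oV [[v Vv] VW]]|] := pselect (open V /\ V !=set0 /\ V `<=` W);
    last by move=> nH; exists set0.
  have [[y [Vy nFy]]|VF] := pselect ((V `\` F n) !=set0).
    have oVF : open (V `\` F n) by apply: openI => //; exact: closed_openC.
    have [V' [oV' V'y cV' sV']] := @lc_shrink hX lc _ y oVF (conj Vy nFy).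
    by exists V' => _; split => //; exists y.
  exfalso; have VsF : V `<=` F n.
    move=> z Vz; apply: contrapT => nFz; apply: VF; by exists z.
  have : V `<=` (F n)° by rewrite -open_subsetE.
  move=> /(_ v Vv) Fv.
  have : (W `&` (F n)°) v by split => //; exact: VW.
  by rewrite WF.
pose g n V := projT1 (cid (H n V)).
have gP n V := projT2 (cid (H n V)).
pose G := fix G (n : nat) : set X := if n is m.+1 then g m (G m) else W.
have GP : forall n, open (G n) /\ G n !=set0 /\ G n `<=` W.
  elim=> [|n [oG [G0 GW]]] /=; first by split=> //; split.
  have [h1 h2 h3 h4] := gP n (G n) (conj oG (conj G0 GW)).
  split => //; split => //.
  move=> z /(@subset_closure _ (g n (G n))) /h4 [] /GW //.
have GS n : [/\ compact (closure (G n.+1)) & closure (G n.+1) `<=` G n `\` F n].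
  have [oG [G0 GW]] := GP n.
  by have [h1 h2 h3 h4] := gP n (G n) (conj oG (conj G0 GW)).
pose C n := closure (G n.+1).
have Cdec : forall k i, C (i + k)%N `<=` C i.
  elim=> [|k IH] i; first by rewrite addn0.
  move=> z Cz; apply: IH; move: Cz; rewrite /C addnS => Cz.
  apply: subset_closure.
  by have [_ /(_ z Cz) []] := GS (i + k).+1%N.
have Cdec' i j : (i <= j)%N -> C j `<=` C i.
  by move=> /subnKC <-; exact: Cdec.
have FF : Filter (filter_from setT C).
  apply: filter_from_filter; first by exists 0%N.
  move=> i j _ _; exists (maxn i j) => // z Cz; split.
    by apply: (Cdec' i (maxn i j)) => //; exact: leq_maxl.
  by apply: (Cdec' j (maxn i j)) => //; exact: leq_maxr.
have PF : ProperFilter (filter_from setT C).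
  apply: filter_from_proper => i _.
  have [_ [[z Gz] _]] := GP i.+1.
  by exists z; exact: subset_closure.
have [p [C0p clp]] := (GS 0%N).1 _ PF (ex_intro2 _ _ 0%N I (fun _ (h : _) => h)).
have Cp n : C n p.
  rewrite /C; apply: closed_closure => B Bp.
  exact: clp (ex_intro2 _ _ n I (fun _ (h : _) => h)) Bp.
exists p; split.
  by have [_ /(_ p C0p) []] := GS 0%N.
by move=> n; have [_ /(_ p (Cp n)) []] := GS n.
Qed.


Definition Dset (s : X -> X) (m : nat) : set X :=
  [set x | exists k, [/\ (0 < k)%N, (k <= m)%N & iter k s x = x]].

Lemma closed_Dset (s : X -> X) : hausdorff_space X -> continuous s ->
  forall m, closed (Dset s m).
Proof.
move=> hX cs; elim=> [|m IH].
  have -> : Dset s 0 = set0.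
    apply/seteqP; split => x // [k [k0 km _]].
    by move: km; rewrite leqn0 => /eqP k0'; move: k0; rewrite k0'.
  exact: closed0.
have -> : Dset s m.+1 = Dset s m `|` [set x | iter m.+1 s x = x].
  apply/seteqP; split => x.
    move=> [k [k0 km fk]]; move: km; rewrite leq_eqVlt => /orP [/eqP ek|km].
      by right; move: fk; rewrite /= ek.
    by left; exists k; split.
  case=> [[k [k0 km fk]]|fx]; first by exists k; split => //; exact: leqW.
  by exists m.+1; split.
apply: closedU; first exact: IH.
have := @closed_fixf (iter m.+1 s) hX (@iter_cont s cs m.+1). exact.
Qed.

Lemma per_step (s : X -> X) : hausdorff_space X -> continuous s ->
  forall m (W : set X), open W -> W !=set0 -> W `<=` Dset s m ->
  exists q, (0 < q)%N /\ W `&` (Per s q)° !=set0.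
Proof.
move=> hX cs; elim=> [|m IH] W oW [w Ww] WD.
  have [k [k0 km _]] := WD w Ww.
  by move: km; rewrite leqn0 => /eqP k0'; move: k0; rewrite k0'.
have [[y [Wy nDy]]|nW1] := pselect ((W `\` Dset s m) !=set0).
  exists m.+1; split => //.
  have oW1 : open (W `\` Dset s m) by apply: openI => //; exact/closed_openC/closed_Dset.
  have W1P : W `\` Dset s m `<=` Per s m.+1.
    move=> z [Wz nDz]; have [k [k0 km fk]] := WD z Wz.
    move: km; rewrite leq_eqVlt => /orP [/eqP ek|km].
      split => //; split; first by rewrite -ek.
      move=> j j0 jm fj; apply: nDz; exists j; split => //.
    by exfalso; apply: nDz; exists k; split.
  have : W `\` Dset s m `<=` (Per s m.+1)° by rewrite -open_subsetE.
  by move=> /(_ y (conj Wy nDy)) Py; exists y.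
apply: IH => //; first by exists w.
move=> z Wz; apply: contrapT => nDz; apply: nW1; by exists z.
Qed.

End Helpers.
Arguments Dset {X}.

Theorem corollaryA3 (X : topologicalType) (s : X -> X) :
  hausdorff_space X -> locally_compact [set: X] -> homeomorphism s ->
  [/\ dense (Aper s `|` \bigcup_(q in [set q : nat | (0 < q)%N]) (Fix s q)°),
      dense (Aper s `|` (\bigcup_(q in [set q : nat | (0 < q)%N]) Fix s q)°),
      dense (Aper s `|` \bigcup_(q in [set q : nat | (0 < q)%N]) (Per s q)°)
    & dense (Aper s `|` (\bigcup_(q in [set q : nat | (0 < q)%N]) Per s q)°)].
Proof.
move=> hX lc [cs _].
have D3 : dense (Aper s `|` \bigcup_(q in [set q : nat | (0 < q)%N]) (Per s q)°).
  move=> U [u0 Uu0] oU.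
  have [[x [Ux Ax]]|nA] := pselect (exists x, U x /\ Aper s x).
    by exists x; split => //; left.
  have OF : forall x, U x -> exists n, Fix s n.+1 x.
    move=> x Ux; apply: contrapT => nF; apply: nA; exists x; split => //.
    move=> [|q] // _ fq; apply: nF; by exists q.
  have [n [z [Uz Fz]]] : exists n, U `&` (Fix s n.+1)° !=set0.
    apply: contrapT => nE.
    have clF : forall n, closed (Fix s n.+1).
      by move=> n; exact: (@closed_fixf X (iter n.+1 s) hX (@iter_cont X s cs n.+1)).
    have eF : forall n, U `&` (Fix s n.+1)° = set0.
      move=> n; apply/seteqP; split => // z Hz; apply: nE; by exists n, z.
    have [x [Ux nF]] := @baire_lc X hX lc (fun n => Fix s n.+1) U oU
        (ex_intro _ u0 Uu0) clF eF.
    by have [n Fn] := OF x Ux; exact: (nF n).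
  have oW : open (U `&` (Fix s n.+1)°) by apply: openI => //; exact: open_interior.
  have WD : U `&` (Fix s n.+1)° `<=` Dset s n.+1.
    move=> y [_ /interior_subset Fy]; by exists n.+1; split.
  have [q [q0 [y [[Uy _] Py]]]] := @per_step X s hX cs n.+1 _ oW (ex_intro _ z (conj Uz Fz)) WD.
  by exists y; split => //; right; exists q.
have PF q : Per s q `<=` Fix s q by move=> x [_ []].
split => //.
- apply: (@dense_sub X _ _ D3) => x [|[q q0 Px]]; [by left|right; exists q => //].
  exact: (interiorS (PF q)).
- apply: (@dense_sub X _ _ D3) => x [|[q q0 Px]]; [by left|right].
  apply: (interiorS _ Px) => y Py; exists q => //; exact: PF.
- apply: (@dense_sub X _ _ D3) => x [|[q q0 Px]]; [by left|right].
  by apply: (interiorS _ Px) => y Py; exists q.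
Qed.
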